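(* Let $\mathcal{V}$ and $\mathcal{W}$ be quaternionic two-sided Banach algebras with unit and let $\mathcal{A}:\mathcal{V}\to\mathcal{W}$ be a continuous isomorphism. Then for all $v\in\mathcal{V}$, $$B_{S,\partial}(v)=B_{S,\partial}(\mathcal{A}(v))=\bigcup_{c\in\mathcal{A}^{-1}(0)}B_{S,\partial}(v+c).$$
   Context: $\mathbb{H}$ denotes the quaternions, $Re(q)$ the real part and $|q|$ the norm of $q$. A quaternionic two-sided Banach algebra with unit is a two-sided $\mathbb{H}$-vector space with an associative product satisfying $x(y+z)=xy+xz$, $(x+y)z=xz+yz$, $q(xy)=(qx)y$, $(xy)q=x(yq)$, complete for a norm with $\|qx\|=|q|\|x\|=\|xq\|$, $\|xy\|\le\|x\|\|y\|$, and with unit $1\ne0$ of norm $1$. A homomorphism is additive, multiplicative, $\mathbb{H}$-linear on both sides and unital; an isomorphism is a bijective homomorphism. For an element $v$ of such an algebra $\mathcal{V}$, $R_q(v)=v^2-2Re(q)v+|q|^21_{\mathcal{V}}$ and $B_{S,\partial}(v)=\{q\in\mathbb{H}: R_q(v)\in\partial(\mathcal{V}\setminus\mathcal{V}^{-1})\}$, where $\mathcal{V}^{-1}$ is the set of invertible elements and $\partial$ denotes topological boundary in $\mathcal{V}$ (and analogously in $\mathcal{W}$). *)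

(* Defs.v *)
From Stdlib Require Import Reals.
Open Scope R_scope.

Record quat : Type := Quat { qr : R; qi : R; qj : R; qk : R }.

Definition qadd (p q : quat) : quat :=
  Quat (qr p + qr q) (qi p + qi q) (qj p + qj q) (qk p + qk q).

Definition qmul (p q : quat) : quat :=
  Quat (qr p * qr q - qi p * qi q - qj p * qj q - qk p * qk q)
       (qr p * qi q + qi p * qr q + qj p * qk q - qk p * qj q)
       (qr p * qj q - qi p * qk q + qj p * qr q + qk p * qi q)
       (qr p * qk q + qi p * qj q - qj p * qi q + qk p * qr q).

Definition qone : quat := Quat 1 0 0 0.
Definition qofR (r : R) : quat := Quat r 0 0 0.
Definition qRe (q : quat) : R := qr q.
Definition qnorm (q : quat) : R :=
  sqrt (qr q * qr q + qi q * qi q + qj q * qj q + qk q * qk q).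

Record QBanachAlg : Type := {
  car :> Type;
  zero : car;
  one : car;
  add : car -> car -> car;
  opp : car -> car;
  mul : car -> car -> car;
  lsc : quat -> car -> car;
  rsc : car -> quat -> car;
  nrm : car -> R;
  addA : forall x y z, add x (add y z) = add (add x y) z;
  addC : forall x y, add x y = add y x;
  add0 : forall x, add zero x = x;
  addN : forall x, add (opp x) x = zero;
  lscDq : forall p q x, lsc (qadd p q) x = add (lsc p x) (lsc q x);
  lscDx : forall q x y, lsc q (add x y) = add (lsc q x) (lsc q y);
  lscM : forall p q x, lsc (qmul p q) x = lsc p (lsc q x);
  lsc1 : forall x, lsc qone x = x;
  rscDq : forall p q x, rsc x (qadd p q) = add (rsc x p) (rsc x q);
  rscDx : forall q x y, rsc (add x y) q = add (rsc x q) (rsc y q);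
  rscM : forall p q x, rsc x (qmul p q) = rsc (rsc x p) q;
  rsc1 : forall x, rsc x qone = x;
  lrsc : forall p q x, rsc (lsc p x) q = lsc p (rsc x q);
  mulA : forall x y z, mul x (mul y z) = mul (mul x y) z;
  mulDr : forall x y z, mul x (add y z) = add (mul x y) (mul x z);
  mulDl : forall x y z, mul (add x y) z = add (mul x z) (mul y z);
  lscMx : forall q x y, lsc q (mul x y) = mul (lsc q x) y;
  rscMx : forall q x y, rsc (mul x y) q = mul x (rsc y q);
  mul1l : forall x, mul one x = x;
  mul1r : forall x, mul x one = x;
  one_neq0 : one <> zero;
  nrm1 : nrm one = 1;
  nrm_ge0 : forall x, 0 <= nrm x;
  nrm_eq0 : forall x, nrm x = 0 -> x = zero;
  nrm0 : nrm zero = 0;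
  nrm_triangle : forall x y, nrm (add x y) <= nrm x + nrm y;
  nrm_lsc : forall q x, nrm (lsc q x) = qnorm q * nrm x;
  nrm_rsc : forall q x, nrm (rsc x q) = qnorm q * nrm x;
  nrm_mul : forall x y, nrm (mul x y) <= nrm x * nrm y;
  complete : forall u : nat -> car,
    (forall eps, 0 < eps -> exists N, forall m n, (N <= m)%nat -> (N <= n)%nat ->
       nrm (add (u m) (opp (u n))) < eps) ->
    exists l, forall eps, 0 < eps -> exists N, forall n, (N <= n)%nat ->
       nrm (add (u n) (opp l)) < eps
}.

Arguments zero {_}. Arguments one {_}. Arguments add {_}. Arguments opp {_}.
Arguments mul {_}. Arguments lsc {_}. Arguments rsc {_}. Arguments nrm {_}.

Section Ops.
Variable V : QBanachAlg.

Definition sub (x y : V) : V := add x (opp y).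

Definition invertible (x : V) : Prop := exists y : V, mul x y = one /\ mul y x = one.

Definition boundary (S : V -> Prop) (x : V) : Prop :=
  forall eps, 0 < eps ->
    (exists y, S y /\ nrm (sub y x) < eps) /\
    (exists z, ~ S z /\ nrm (sub z x) < eps).

(** R_q(v) = v^2 - 2 Re(q) v + |q|^2 1  (real scalars act on the left) *)
Definition Rq (q : quat) (v : V) : V :=
  add (sub (mul v v) (lsc (qofR (2 * qRe q)) v)) (lsc (qofR (qnorm q ^ 2)) one).

Definition BSbd (v : V) (q : quat) : Prop :=
  boundary (fun x => ~ invertible x) (Rq q v).
End Ops.

Arguments sub {_}. Arguments invertible {_}. Arguments boundary {_}.
Arguments Rq {_}. Arguments BSbd {_}.

Definition is_hom (V W : QBanachAlg) (A : V -> W) : Prop :=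
  (forall x y, A (add x y) = add (A x) (A y)) /\
  (forall x y, A (mul x y) = mul (A x) (A y)) /\
  (forall q x, A (lsc q x) = lsc q (A x)) /\
  (forall q x, A (rsc x q) = rsc (A x) q) /\
  A one = one.

Definition is_iso (V W : QBanachAlg) (A : V -> W) : Prop :=
  is_hom V W A /\ (forall x y, A x = A y -> x = y) /\ (forall w, exists x, A x = w).

Definition is_continuous (V W : QBanachAlg) (A : V -> W) : Prop :=
  forall x eps, 0 < eps -> exists delta, 0 < delta /\
    forall y, nrm (sub y x) < delta -> nrm (sub (A y) (A x)) < eps.

(* Main.v *)
Require Import Defs.
From Stdlib Require Import Reals Lra Lia Classical IndefiniteDescription.
Open Scope R_scope.

Section Alg.
Variable X : QBanachAlg.
Implicit Types x y z : X.

Lemma addr0 x : add x zero = x.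
Proof. rewrite addC; apply add0. Qed.
Lemma addNr' x : add x (opp x) = zero.
Proof. rewrite addC; apply addN. Qed.
Lemma add_cancel x y z : add x y = add x z -> y = z.
Proof.
  intro H. rewrite <- (add0 _ y), <- (add0 _ z), <- (addN _ x), <- !addA, H.
  reflexivity.
Qed.
Lemma opp_uniq (a x : X) : add a x = zero -> a = opp x.
Proof. intro H. apply (add_cancel x). rewrite addC, H, addNr'. reflexivity. Qed.
Lemma oppK x : opp (opp x) = x.
Proof. symmetry; apply opp_uniq; apply addNr'. Qed.
Lemma oppD x y : opp (add x y) = add (opp x) (opp y).
Proof.
  symmetry; apply opp_uniq.
  rewrite (addC _ x y), addA, <- (addA _ (opp x) (opp y) y), addN, addr0, addN.
  reflexivity.
Qed.
Lemma opp0 : opp (@zero X) = zero.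
Proof. symmetry; apply opp_uniq; apply add0. Qed.
Lemma subrr x : sub x x = zero.
Proof. apply addNr'. Qed.
Lemma sub0r x : sub x zero = x.
Proof. unfold sub; rewrite opp0; apply addr0. Qed.
Lemma sub_tri_eq x y z : sub x z = add (sub x y) (sub y z).
Proof.
  unfold sub. rewrite addA, <- (addA _ x (opp y) y), addN, addr0. reflexivity.
Qed.
Lemma opp_sub x y : opp (sub x y) = sub y x.
Proof. unfold sub; rewrite oppD, oppK, addC. reflexivity. Qed.
Lemma addACA (a b c d : X) : add (add a b) (add c d) = add (add a c) (add b d).
Proof.
  rewrite <- (addA _ a b), (addA _ b c d), (addC _ b c), <- (addA _ c b d), (addA _ a c).
  reflexivity.
Qed.
Lemma sub_interchange (a b c d : X) : sub (sub a b) (sub c d) = sub (sub a c) (sub b d).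
Proof. unfold sub. rewrite !oppD, !oppK. apply addACA. Qed.
Lemma sub_addl (a b : X) : sub (add a b) a = b.
Proof. unfold sub. rewrite (addC _ a b), <- addA, addNr'. apply addr0. Qed.
Lemma sub_addr (a b c : X) : sub a (add b c) = sub (sub a b) c.
Proof. unfold sub. rewrite oppD. apply addA. Qed.
Lemma sub_add_swap (a b c : X) : sub (add a b) c = add (sub a c) b.
Proof. unfold sub. rewrite <- !addA, (addC _ b). reflexivity. Qed.
Lemma sub_eq0 x y : sub x y = zero -> x = y.
Proof. intro H. rewrite (opp_uniq _ _ H). apply oppK. Qed.

Lemma qadd_R a b : qadd (qofR a) (qofR b) = qofR (a + b).
Proof. unfold qadd, qofR; simpl. f_equal; ring. Qed.
Lemma qmul_R a b : qmul (qofR a) (qofR b) = qofR (a * b).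
Proof. unfold qmul, qofR; simpl. f_equal; ring. Qed.
Lemma qnorm_R r : qnorm (qofR r) = Rabs r.
Proof.
  unfold qnorm, qofR; simpl.
  replace (r * r + 0 * 0 + 0 * 0 + 0 * 0) with (Rsqr r) by (unfold Rsqr; ring).
  apply sqrt_Rsqr_abs.
Qed.

Lemma lsc_zero q : lsc q (@zero X) = zero.
Proof.
  symmetry. apply (add_cancel (lsc q zero)).
  rewrite <- lscDx, add0, addr0. reflexivity.
Qed.
Lemma lsc_opp q x : lsc q (opp x) = opp (lsc q x).
Proof. apply opp_uniq. rewrite <- lscDx, addN. apply lsc_zero. Qed.
Lemma lsc0 x : lsc (qofR 0) x = zero.
Proof.
  symmetry. apply (add_cancel (lsc (qofR 0) x)).
  rewrite <- lscDq, qadd_R, addr0, Rplus_0_r. reflexivity.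
Qed.
Lemma opp_lsc x : opp x = lsc (qofR (-1)) x.
Proof.
  symmetry; apply opp_uniq.
  rewrite <- (lsc1 _ x) at 2. change qone with (qofR 1).
  rewrite <- lscDq, qadd_R. replace (-1 + 1) with 0 by ring. apply lsc0.
Qed.
Lemma nrm_opp x : nrm (opp x) = nrm x.
Proof.
  rewrite opp_lsc, nrm_lsc, qnorm_R. replace (Rabs (-1)) with 1 by (rewrite Rabs_left; lra). ring.
Qed.
Lemma nrm_sub_sym x y : nrm (sub x y) = nrm (sub y x).
Proof. rewrite <- opp_sub, nrm_opp. reflexivity. Qed.
Lemma nrm_sub_tri x y z : nrm (sub x z) <= nrm (sub x y) + nrm (sub y z).
Proof. rewrite (sub_tri_eq x y z). apply nrm_triangle. Qed.
Lemma nrm_sub_le x y : nrm (sub x y) <= nrm x + nrm y.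
Proof. unfold sub. rewrite <- (nrm_opp y). apply nrm_triangle. Qed.

Definition sc (r : R) x := lsc (qofR r) x.
Lemma sc_nrm r x : nrm (sc r x) = Rabs r * nrm x.
Proof. unfold sc. rewrite nrm_lsc, qnorm_R. reflexivity. Qed.
Lemma sc_sc a b x : sc a (sc b x) = sc (a * b) x.
Proof. unfold sc. rewrite <- lscM, qmul_R. reflexivity. Qed.
Lemma sc1 x : sc 1 x = x.
Proof. apply lsc1. Qed.
Lemma sc_sub a x y : sc a (sub x y) = sub (sc a x) (sc a y).
Proof. unfold sc, sub. rewrite lscDx, lsc_opp. reflexivity. Qed.

End Alg.

Lemma le_eps a b : (forall eps, 0 < eps -> a <= b + eps) -> a <= b.
Proof.
  intro H. apply Rnot_lt_le. intro Hlt.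
  specialize (H ((a - b) / 2) ltac:(lra)). lra.
Qed.

Lemma half_pow_pos n : 0 < (/2) ^ n.
Proof. apply pow_lt; lra. Qed.
Lemma half_pow_le j N : (/2) ^ (j + N) <= (/2) ^ N.
Proof.
  induction j; simpl. lra.
  pose proof (half_pow_pos (j + N)). lra.
Qed.
Lemma half_pow_small y : 0 < y -> exists N, (/2) ^ N < y.
Proof.
  intro Hy. destruct (pow_lt_1_zero (/2) ltac:(rewrite Rabs_pos_eq; lra) y Hy) as [N HN].
  exists N. specialize (HN N (le_n N)). rewrite Rabs_pos_eq in HN; auto.
  left; apply half_pow_pos.
Qed.
Lemma half_pow_ge n N : (N <= n)%nat -> (/2) ^ n <= (/2) ^ N.
Proof. intro H. replace n with ((n - N) + N)%nat by lia. apply half_pow_le. Qed.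

Fixpoint iter_seq {T} (st : nat -> T -> T) (x0 : T) (n : nat) : T :=
  match n with O => x0 | S k => st k (iter_seq st x0 k) end.

Lemma baire (X : QBanachAlg) (F : nat -> X -> Prop) :
  (forall w, exists n, F n w) ->
  exists n w0 r, 0 < r /\ forall w, nrm (sub w w0) < r ->
    forall eps, 0 < eps -> exists f, F n f /\ nrm (sub w f) < eps.
Proof.
  intro Hcov. apply NNPP; intro Hn.
  assert (Hstep: forall n (c : X) r, 0 < r -> exists c' r', 0 < r' /\ r' <= r / 2 /\
            nrm (sub c' c) + r' <= r /\ forall y, nrm (sub y c') <= r' -> ~ F n y).
  { intros n c r Hr.
    assert (H: exists w, nrm (sub w c) < r /\ exists eps, 0 < eps /\
               forall f, F n f -> eps <= nrm (sub w f)).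
    { apply NNPP; intro H2. apply Hn. exists n, c, r. split; auto.
      intros w Hw eps Heps. apply NNPP; intro H3. apply H2. exists w. split; auto.
      exists eps; split; auto. intros f Hf. apply Rnot_lt_le; intro H4.
      apply H3. exists f; auto. }
    destruct H as [w [Hw [eps [Heps Hf]]]].
    pose proof (nrm_ge0 _ (sub w c)) as Hd.
    exists w, (Rmin (eps / 2) ((r - nrm (sub w c)) / 2)).
    pose proof (Rmin_l (eps / 2) ((r - nrm (sub w c)) / 2)).
    pose proof (Rmin_r (eps / 2) ((r - nrm (sub w c)) / 2)).
    repeat split.
    - apply Rmin_glb_lt; lra.
    - lra.
    - lra.
    - intros y Hy Fy. specialize (Hf y Fy). rewrite nrm_sub_sym in Hy. lra. }
  assert (Hstep': forall n (p : X * R), exists p' : X * R, 0 < snd p ->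
     (0 < snd p' /\ snd p' <= snd p / 2 /\ nrm (sub (fst p') (fst p)) + snd p' <= snd p /\
      forall y, nrm (sub y (fst p')) <= snd p' -> ~ F n y)).
  { intros n [c r]. destruct (Rlt_dec 0 r) as [Hr|Hr].
    - destruct (Hstep n c r Hr) as [c' [r' H]]. exists (c', r'). intros _. exact H.
    - exists (c, r). intro; contradiction. }
  set (st := fun n p => proj1_sig (constructive_indefinite_description _ (Hstep' n p))).
  assert (Hst : forall n p, 0 < snd p -> (0 < snd (st n p) /\ snd (st n p) <= snd p / 2 /\
      nrm (sub (fst (st n p)) (fst p)) + snd (st n p) <= snd p /\
      forall y, nrm (sub y (fst (st n p))) <= snd (st n p) -> ~ F n y)).
  { intros n p. exact (proj2_sig (constructive_indefinite_description _ (Hstep' n p))). }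
  set (s := iter_seq st (zero, 1)).
  assert (Hpos : forall n, 0 < snd (s n)).
  { induction n. simpl; lra. apply (Hst n (s n) IHn). }
  assert (HS : forall n, s (S n) = st n (s n)) by reflexivity.
  assert (Hnest : forall k n, nrm (sub (fst (s (k + n)%nat)) (fst (s n))) + snd (s (k + n)%nat) <= snd (s n)).
  { induction k; intro n.
    - simpl. rewrite subrr, nrm0. lra.
    - change (S k + n)%nat with (S (k + n)). rewrite HS.
      destruct (Hst (k + n)%nat _ (Hpos (k + n)%nat)) as [_ [_ [H3 _]]].
      pose proof (nrm_sub_tri _ (fst (st (k + n)%nat (s (k + n)%nat))) (fst (s (k + n)%nat)) (fst (s n))).
      specialize (IHk n). lra. }
  assert (Hgeo : forall n, snd (s n) <= (/2) ^ n).
  { induction n. simpl; lra. rewrite HS. destruct (Hst n _ (Hpos n)) as [_ [H2 _]].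
    simpl. lra. }
  assert (Hcd : forall m n, (n <= m)%nat -> nrm (sub (fst (s m)) (fst (s n))) <= (/2) ^ n).
  { intros m n Hmn. replace m with ((m - n) + n)%nat by lia.
    pose proof (Hnest (m - n)%nat n). pose proof (Hpos ((m - n) + n)%nat).
    pose proof (Hgeo n). lra. }
  destruct (complete _ (fun n => fst (s n))) as [l Hl].
  { intros eps Heps. destruct (half_pow_small eps Heps) as [N HN].
    exists N. intros m n Hm Hn'. change (nrm (sub (fst (s m)) (fst (s n))) < eps).
    destruct (Compare_dec.le_lt_dec n m) as [H|H].
    - pose proof (Hcd m n H). pose proof (half_pow_ge n N Hn'). lra.
    - rewrite nrm_sub_sym. pose proof (Hcd n m ltac:(lia)). pose proof (half_pow_ge m N Hm). lra. }
  assert (Hlim : forall n, nrm (sub l (fst (s n))) <= snd (s n)).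
  { intro n. apply le_eps. intros eps Heps. destruct (Hl eps Heps) as [N HN].
    set (m := max N n). specialize (HN m ltac:(lia)).
    change (nrm (sub (fst (s m)) l) < eps) in HN. rewrite nrm_sub_sym in HN.
    pose proof (nrm_sub_tri _ l (fst (s m)) (fst (s n))).
    pose proof (Hnest (m - n)%nat n). replace ((m - n) + n)%nat with m in H0 by lia.
    pose proof (Hpos m). lra. }
  destruct (Hcov l) as [n Fn].
  destruct (Hst n _ (Hpos n)) as [_ [_ [_ H4]]].
  apply (H4 l); auto. rewrite <- HS. apply Hlim.
Qed.

Section BI.
Variables V W : QBanachAlg.
Variable A : V -> W.
Hypothesis Hadd : forall x y, A (add x y) = add (A x) (A y).
Hypothesis Hsc : forall r x, A (sc V r x) = sc W r (A x).
Hypothesis Hc : is_continuous V W A.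
Hypothesis Hsurj : forall w, exists x, A x = w.

Lemma A0 : A zero = zero.
Proof.
  symmetry. apply (add_cancel _ (A zero)). rewrite <- Hadd, add0, addr0. reflexivity.
Qed.
Lemma Aopp x : A (opp x) = opp (A x).
Proof. apply opp_uniq. rewrite <- Hadd, addN. apply A0. Qed.
Lemma Asub x y : A (sub x y) = sub (A x) (A y).
Proof. unfold sub. rewrite Hadd, Aopp. reflexivity. Qed.

Lemma step1 : exists M, 0 <= M /\ forall w eps, 0 < eps ->
   exists u, nrm u <= M * nrm w /\ nrm (sub w (A u)) < eps.
Proof.
  destruct (baire W (fun n w => exists u, nrm u <= INR n /\ A u = w)) as [n [w0 [r [Hr Hb]]]].
  { intro w. destruct (Hsurj w) as [u Hu]. destruct (INR_unbounded (nrm u)) as [n Hn].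
    exists n, u. split; auto. lra. }
  assert (G : forall w, nrm w < r -> forall eps, 0 < eps ->
            exists u, nrm u <= 2 * INR n /\ nrm (sub w (A u)) < eps).
  { intros w Hw eps Heps.
    destruct (Hb (add w0 w) ltac:(rewrite sub_addl; auto) (eps / 2) ltac:(lra))
      as [f1 [[u1 [Hu1 Hf1]] H1]].
    destruct (Hb w0 ltac:(rewrite subrr, nrm0; auto) (eps / 2) ltac:(lra))
      as [f2 [[u2 [Hu2 Hf2]] H2]].
    exists (sub u1 u2). split.
    - pose proof (nrm_sub_le _ u1 u2). lra.
    - rewrite Asub, Hf1, Hf2. rewrite <- (sub_addl _ w0 w) at 1.
      rewrite sub_interchange. pose proof (nrm_sub_le _ (sub (add w0 w) f1) (sub w0 f2)).
      lra. }
  exists (4 * INR n / r). split.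
  { pose proof (pos_INR n). apply Rmult_le_pos; [lra|]. left; apply Rinv_0_lt_compat; lra. }
  intros w eps Heps.
  pose proof (nrm_ge0 _ w) as Hw0.
  destruct (Req_dec (nrm w) 0) as [Hw|Hw].
  - exists zero. rewrite nrm0, A0, sub0r, Hw. split; lra.
  - set (t := r / (2 * nrm w)).
    assert (Ht : 0 < t). { unfold t. apply Rdiv_lt_0_compat; lra. }
    assert (Htw : t * nrm w = r / 2). { unfold t. field. auto. }
    destruct (G (sc W t w) ltac:(rewrite sc_nrm, Rabs_pos_eq; lra) (t * eps)
               ltac:(apply Rmult_lt_0_compat; lra)) as [u' [Hu' Hsm]].
    exists (sc V (/ t) u'). split.
    + rewrite sc_nrm, Rabs_pos_eq by (left; apply Rinv_0_lt_compat; lra).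
      replace (4 * INR n / r * nrm w) with (/ t * (2 * INR n)) by (unfold t; field; lra).
      apply Rmult_le_compat_l; [left; apply Rinv_0_lt_compat; lra | lra].
    + rewrite Hsc. replace w with (sc W (/ t) (sc W t w)) at 1
        by (rewrite sc_sc, Rinv_l, sc1 by lra; reflexivity).
      rewrite <- sc_sub, sc_nrm, Rabs_pos_eq by (left; apply Rinv_0_lt_compat; lra).
      apply Rmult_lt_reg_l with t; auto. rewrite <- Rmult_assoc, Rinv_r, Rmult_1_l by lra.
      exact Hsm.
Qed.

End BI.

Section BI2.
Variables V W : QBanachAlg.
Variable A : V -> W.
Hypothesis Hadd : forall x y, A (add x y) = add (A x) (A y).
Hypothesis Hsc : forall r x, A (sc V r x) = sc W r (A x).
Hypothesis Hc : is_continuous V W A.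
Hypothesis Hsurj : forall w, exists x, A x = w.

Lemma step2 : exists C, 0 < C /\ forall w, exists x, A x = w /\ nrm x <= C * nrm w.
Proof.
  destruct (step1 V W A Hadd Hsc Hsurj) as [M [HM HM']].
  assert (Hh : forall w, exists u, nrm u <= M * nrm w /\ nrm (sub w (A u)) <= nrm w / 2).
  { intro w. pose proof (nrm_ge0 _ w).
    destruct (Req_dec (nrm w) 0) as [Hw|Hw].
    - exists zero. rewrite nrm0, A0 by auto. rewrite sub0r, Hw. split; lra.
    - destruct (HM' w (nrm w / 2) ltac:(lra)) as [u [H1 H2]]. exists u. split; lra. }
  set (g := fun w => proj1_sig (constructive_indefinite_description _ (Hh w))).
  assert (Hg : forall w, nrm (g w) <= M * nrm w /\ nrm (sub w (A (g w))) <= nrm w / 2).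
  { intro w. exact (proj2_sig (constructive_indefinite_description _ (Hh w))). }
  exists (2 * M + 1). split; [lra|]. intro w.
  set (K := M * nrm w).
  assert (HK : 0 <= K) by (apply Rmult_le_pos; auto; apply nrm_ge0).
  set (p := iter_seq (fun _ (q : (W * V)%type) => (sub (fst q) (A (g (fst q))), add (snd q) (g (fst q)))) (w, zero)).
  assert (HS : forall k, p (S k) = (sub (fst (p k)) (A (g (fst (p k)))), add (snd (p k)) (g (fst (p k)))))
    by reflexivity.
  assert (Hinv : forall k, sub w (A (snd (p k))) = fst (p k)).
  { induction k. simpl. rewrite A0 by auto. apply sub0r.
    rewrite HS. simpl. rewrite Hadd, sub_addr, IHk. reflexivity. }
  assert (He : forall k, nrm (fst (p k)) <= (/2) ^ k * nrm w).
  { induction k. simpl; lra. rewrite HS. simpl fst.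
    destruct (Hg (fst (p k))) as [_ H2]. simpl. lra. }
  assert (Hgk : forall k, nrm (g (fst (p k))) <= K * (/2) ^ k).
  { intro k. destruct (Hg (fst (p k))) as [H1 _]. pose proof (He k).
    unfold K. replace (M * nrm w * (/2) ^ k) with (M * ((/2) ^ k * nrm w)) by ring.
    apply Rle_trans with (1 := H1). apply Rmult_le_compat_l; auto. }
  assert (Hsum : forall j n, nrm (sub (snd (p (j + n)%nat)) (snd (p n))) <= 2 * K * (/2) ^ n - 2 * K * (/2) ^ (j + n)).
  { induction j; intro n.
    - simpl. rewrite subrr, nrm0. lra.
    - change (S j + n)%nat with (S (j + n)). rewrite HS. simpl snd.
      rewrite sub_add_swap. eapply Rle_trans; [apply nrm_triangle|].
      specialize (IHj n). pose proof (Hgk (j + n)%nat).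
      replace (2 * K * (/2) ^ S (j + n)) with (K * (/2) ^ (j + n)) by (simpl; field).
      lra. }
  assert (Hcd : forall m n, (n <= m)%nat -> nrm (sub (snd (p m)) (snd (p n))) <= 2 * K * (/2) ^ n).
  { intros m n Hmn. replace m with ((m - n) + n)%nat by lia.
    pose proof (Hsum (m - n)%nat n). pose proof (half_pow_pos ((m - n) + n)%nat).
    assert (0 <= 2 * K * (/2) ^ (m - n + n)) by (apply Rmult_le_pos; lra). lra. }
  destruct (complete _ (fun n => snd (p n))) as [x Hx].
  { intros eps Heps. destruct (half_pow_small (eps / (2 * K + 1))) as [N HN].
    { apply Rdiv_lt_0_compat; lra. }
    assert (HN' : 2 * K * (/2) ^ N < eps).
    { apply Rle_lt_trans with ((2 * K + 1) * (/2) ^ N).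
      pose proof (half_pow_pos N). nra.
      apply Rmult_lt_reg_l with (/ (2 * K + 1)). apply Rinv_0_lt_compat; lra.
      rewrite <- Rmult_assoc, Rinv_l by lra. unfold Rdiv in HN. lra. }
    exists N. intros m n Hm Hn'. change (nrm (sub (snd (p m)) (snd (p n))) < eps).
    destruct (Compare_dec.le_lt_dec n m) as [H|H].
    - pose proof (Hcd m n H). pose proof (half_pow_ge n N Hn'). nra.
    - rewrite nrm_sub_sym. pose proof (Hcd n m ltac:(lia)). pose proof (half_pow_ge m N Hm). nra. }
  exists x. split.
  - apply sub_eq0. apply nrm_eq0. apply Rle_antisym; [|apply nrm_ge0].
    apply le_eps. intros eps Heps. rewrite Rplus_0_l.
    destruct (Hc x (eps / 2) ltac:(lra)) as [delta [Hd Hdc]].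
    destruct (Hx delta Hd) as [N1 HN1].
    destruct (half_pow_small (eps / (2 * (nrm w + 1)))) as [N2 HN2].
    { pose proof (nrm_ge0 _ w). apply Rdiv_lt_0_compat; lra. }
    set (n := max N1 N2). specialize (HN1 n ltac:(lia)).
    specialize (Hdc (snd (p n)) HN1).
    pose proof (nrm_sub_tri _ w (A (snd (p n))) (A x)).
    rewrite Hinv in H. pose proof (He n). pose proof (half_pow_ge n N2 ltac:(lia)).
    pose proof (nrm_ge0 _ w).
    assert ((/2) ^ n * nrm w <= eps / 2).
    { apply Rle_trans with ((/2) ^ N2 * (nrm w + 1)). pose proof (half_pow_pos n). nra.
      unfold Rdiv in HN2. rewrite Rinv_mult in HN2.
      apply Rmult_lt_compat_r with (r := nrm w + 1) in HN2; [|lra].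
      replace (eps * (/ 2 * / (nrm w + 1)) * (nrm w + 1)) with (eps / 2) in HN2 by (field; lra).
      lra. }
    rewrite nrm_sub_sym. lra.
  - apply le_eps. intros eps Heps.
    destruct (Hx eps Heps) as [N HN]. specialize (HN N (le_n N)).
    change (nrm (sub (snd (p N)) x) < eps) in HN. rewrite nrm_sub_sym in HN.
    pose proof (nrm_sub_tri _ x (snd (p N)) zero).
    rewrite !sub0r in H.
    pose proof (Hsum N 0%nat). rewrite Nat.add_0_r in H0. simpl in H0. rewrite sub0r in H0.
    pose proof (half_pow_pos N). pose proof (nrm_ge0 _ w).
    assert (K <= M * nrm w) by (unfold K; lra).
    nra.
Qed.

End BI2.

Lemma bsbd_fwd (V W : QBanachAlg) (A : V -> W)
  (HA : is_iso V W A) (Hc : is_continuous V W A) (v : V) (q : quat) :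
  (BSbd v q <-> BSbd (A v) q).
Proof.
  destruct HA as [[Hadd [Hmul [Hlsc [Hrsc Hone]]]] [Hinj Hsurj]].
  assert (Hsc : forall r x, A (sc V r x) = sc W r (A x)) by (intros; apply Hlsc).
  assert (HRq : A (Rq q v) = Rq q (A v)).
  { unfold Rq, sub. rewrite Hadd, Hadd, (Aopp V W A Hadd), Hmul, !Hlsc, Hone. reflexivity. }
  assert (Hinvf : forall x, invertible x -> invertible (A x)).
  { intros x [y [H1 H2]]. exists (A y). rewrite <- !Hmul, H1, H2. auto. }
  assert (Hinvb : forall x, invertible (A x) -> invertible x).
  { intros x [w [H1 H2]]. destruct (Hsurj w) as [y Hy]. subst w. exists y.
    rewrite <- Hone, <- Hmul in H1, H2. split; apply Hinj; auto. }
  destruct (step2 V W A Hadd Hsc Hc Hsurj) as [C [HC HCb]].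
  unfold BSbd, boundary. rewrite <- HRq. set (x := Rq q v). split.
  - intros H eps Heps. destruct (Hc x eps Heps) as [delta [Hd Hdc]].
    destruct (H delta Hd) as [[y [Hy1 Hy2]] [z [Hz1 Hz2]]]. split.
    + exists (A y). split; auto.
    + exists (A z). split; auto. intro Hn. apply Hz1. intro Hi. apply Hn. auto.
  - intros H eps Heps. destruct (H (eps / C) ltac:(apply Rdiv_lt_0_compat; lra))
      as [[y' [Hy1 Hy2]] [z' [Hz1 Hz2]]].
    destruct (Hsurj y') as [y Hy]. destruct (Hsurj z') as [z Hz]. subst y' z'.
    assert (Hb : forall u, nrm (sub u x) <= C * nrm (sub (A u) (A x))).
    { intro u. destruct (HCb (sub (A u) (A x))) as [u' [Hu1 Hu2]].
      rewrite <- (Asub V W A Hadd) in Hu1. apply Hinj in Hu1. subst u'. exact Hu2. }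
    assert (Hl : forall u, nrm (sub (A u) (A x)) < eps / C -> nrm (sub u x) < eps).
    { intros u Hu. apply Rle_lt_trans with (1 := Hb u).
      apply Rmult_lt_compat_l with (r := C) in Hu; auto.
      replace (C * (eps / C)) with eps in Hu by (field; lra). exact Hu. }
    split.
    + exists y. split. intro Hi. apply Hy1. auto. auto.
    + exists z. split; auto. intro Hn. apply Hz1. intro Hi. apply Hn. auto.
Qed.

Theorem mainTheorem8 (V W : QBanachAlg) (A : V -> W)
  (HA : is_iso V W A) (Hc : is_continuous V W A) :
  forall (v : V) (q : quat),
    (BSbd v q <-> BSbd (A v) q) /\
    (BSbd (A v) q <-> exists c : V, A c = zero /\ BSbd (add v c) q).
Proof.
  intros v q. split; [apply bsbd_fwd; auto|].
  pose proof HA as [[Hadd _] [Hinj _]].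
  split.
  - intro H. exists zero. split; [apply (A0 V W A Hadd)|]. rewrite addr0.
    apply (bsbd_fwd V W A HA Hc). auto.
  - intros [c [Hc0 Hb]]. rewrite <- (A0 V W A Hadd) in Hc0. apply Hinj in Hc0. subst c.
    rewrite addr0 in Hb. apply (bsbd_fwd V W A HA Hc). auto.
Qed.
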